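(* In the Part I procedure, let $xy$ be an edge processed in a bridge step of phase $\Delta$ whose skewness $|\mathrm{lcp}(x)-\mathrm{lcp}(y)|$ is neither $0$ nor $2$, and let $z$ be a vertex that becomes even in this bridge step. Then $\mathrm{lcp}(z)>\max(\mathrm{lcp}(x),\mathrm{lcp}(y))$. Consequently, any bridge of phase $\Delta$ having $z$ as an endpoint has skewness larger than that of $xy$.
   Context: Let $G=(V,E)$ be a finite undirected graph and $M$ a matching in $G$; free vertices and $\mathit{mate}(v)$ are as usual. The Part I procedure maintains a search structure $S$: a forest whose nodes are either single (odd) vertices or blossoms (disjoint vertex sets with a distinguished base vertex), each tree rooted at a blossom containing a free vertex. Vertices in $S$ are labelled even (those in blossoms) or odd; vertices not in $S$ are unlabelled. A vertex is born even/odd according to the label it receives when inserted. The procedure maintains $\mathrm{lcp}(v)$ for even vertices and $\mathrm{lcp}_{\mathrm{odd}}(v)$ for vertices born odd. The blossom nodes currently in $S$ are the maximal blossoms. Phase $0$: every free vertex $v$ becomes the root of its own tree as a trivial blossom $\{v\}$ with base $v$, even, $\mathrm{lcp}(v)=0$. For $\Delta=1,2,\dots$, phase $\Delta$ does: (i) if $\Delta$ is even, growth steps: while some even vertex $v$ with $\mathrm{lcp}(v)=\Delta-2$ has a neighbour $x$ not in $S$, add $x$ as an odd child of the blossom containing $v$ with $\mathrm{lcp}_{\mathrm{odd}}(x)=\Delta-1$, and $\mathit{mate}(x)$ as a child of $x$, as a trivial even blossom with $\mathrm{lcp}(\mathit{mate}(x))=\Delta$; (ii) bridge steps: while there is a non-matching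 edge $xy$ with $x,y$ even, in different maximal blossoms $B_x,B_y$, and $\mathrm{lcp}(x)+\mathrm{lcp}(y)=2\Delta-2$: if $B_x,B_y$ lie in different trees the procedure stops; otherwise let $B$ be the lowest common ancestor of $B_x,B_y$; every odd vertex $z$ on the tree paths from $B_x$ and $B_y$ to $B$ becomes even with $\mathrm{lcp}(z)=\mathrm{lcp}(x)+1+\mathrm{lcp}(y)-\mathrm{lcp}_{\mathrm{odd}}(z)$, and $B$ together with all blossoms and odd vertices on both paths is merged into one new blossom with base equal to the base of $B$, replacing $B$ in the tree. The skewness of an edge $xy$ with both endpoints even is $|\mathrm{lcp}(x)-\mathrm{lcp}(y)|$. *)

(* Defs.v *)
From mathcomp Require Import all_boot.
Set Implicit Arguments. Unset Strict Implicit. Unset Printing Implicit Defensive.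

(* Labels: None = unlabelled (not in S), Some true = even, Some false = odd. *)
Definition label := option bool.
Definition Unl : label := None.
Definition Even : label := Some true.
Definition Odd : label := Some false.

(* State of the search structure S.
   - lab v       : label of v
   - lcp v       : lcp(v) (meaningful for even vertices)
   - lcpo v      : lcp_odd(v) (meaningful for vertices born odd)
   - oparent x   : for an odd vertex x, the even vertex v through which x was
                   attached (x is a child of the maximal blossom containing v)
   - blos v      : for an even vertex v, the base of the maximal blossom
                   containing v (blossoms are identified by their base). *)
Record state (T : Type) := State {
  lab : T -> label;
  lcp : T -> nat;
  lcpo : T -> nat;
  oparent : T -> T;
  blos : T -> T }.

(* Nodes of the forest: (true, b) = maximal blossom with base b,
   (false, x) = single odd vertex x. *)
Definition node (T : Type) := (bool * T)%type.

Definition skew (a b : nat) : nat := (a - b) + (b - a).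

Section PartI.
Variables (T : finType) (adj : rel T) (mate : T -> option T).

(* Tree parent of a node: the parent of the blossom with base b is the odd
   vertex mate(b) (none if b is free, i.e. a root); the parent of the odd
   vertex x is the maximal blossom containing oparent(x). *)
Definition par (s : state T) (u : node T) : option (node T) :=
  if u.1 then (match mate u.2 with Some x => Some (false, x) | None => None end)
  else Some (true, blos s (oparent s u.2)).

Fixpoint ancs (s : state T) (k : nat) (u : node T) : seq (node T) :=
  match k with
  | 0 => [:: u]
  | k'.+1 => u :: match par s u with Some p => ancs s k' p | None => [::] end
  end.

(* list of ancestors u, parent u, ..., root (depth bounded by 2|V|+1) *)
Definition anc (s : state T) (u : node T) : seq (node T) :=
  ancs s (2 * #|T|).+1 u.

Definition root (s : state T) (u : node T) : node T := last u (anc s u).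

Definition lca (s : state T) (u v : node T) : node T :=
  head u [seq w <- anc s u | w \in anc s v].

Definition pathto (s : state T) (u w : node T) : seq (node T) :=
  take (index w (anc s u)) (anc s u).

Definition init_state : state T :=
  State (fun v => if mate v is None then Even else Unl)
        (fun _ => 0) (fun _ => 0) id id.

Definition grow_elig (D : nat) (s : state T) (v x : T) : Prop :=
  ~~ odd D /\ lab s v = Even /\ lcp s v = D - 2 /\ adj v x /\ lab s x = Unl.

Definition grow_step (D : nat) (s : state T) (v x : T) (s' : state T) : Prop :=
  grow_elig D s v x /\
  exists m, mate x = Some m /\
   s' = State
     (fun w => if w == x then Odd else if w == m then Even else lab s w)
     (fun w => if w == m then D else lcp s w)
     (fun w => if w == x then D - 1 else lcpo s w)
     (fun w => if w == x then v else oparent s w)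
     (fun w => if w == m then m else blos s w).

Definition is_bridge (D : nat) (s : state T) (x y : T) : Prop :=
  adj x y /\ mate x <> Some y /\ lab s x = Even /\ lab s y = Even /\
  blos s x <> blos s y /\ lcp s x + lcp s y = 2 * D - 2.

Definition bridge_step (D : nat) (s : state T) (x y : T) (s' : state T) : Prop :=
  is_bridge D s x y /\
  let Bx : node T := (true, blos s x) in
  let By : node T := (true, blos s y) in
  root s Bx = root s By /\
  let B := lca s Bx By in
  let P := pathto s Bx B ++ pathto s By B in
  let becomes_even w := ((false, w) \in P) && (lab s w == Odd) in
  let in_new w :=
    ((lab s w == Even) && (((true, blos s w) \in P) || ((true, blos s w) == B)))
    || becomes_even w in
  B.1 = true /\
  s' = State
     (fun w => if becomes_even w then Even else lab s w)
     (fun w => if becomes_even w then lcp s x + 1 + lcp s y - lcpo s w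
               else lcp s w)
     (lcpo s)
     (oparent s)
     (fun w => if in_new w then B.2 else blos s w).

(* ---- configurations: (phase, in growth sub-phase?, state) ---- *)
Definition config := (nat * bool * state T)%type.

Inductive step : config -> config -> Prop :=
| st_grow D s v x s' :
    grow_step D s v x s' -> step (D, true, s) (D, true, s')
| st_endgrow D s :
    (forall v x, ~ grow_elig D s v x) -> step (D, true, s) (D, false, s)
| st_bridge D s x y s' :
    bridge_step D s x y s' -> step (D, false, s) (D, false, s')
| st_endbridge D s :
    (forall x y, ~ is_bridge D s x y) -> step (D, false, s) (D.+1, true, s).

Inductive reach : config -> config -> Prop :=
| reach_refl c : reach c c
| reach_step c1 c2 c3 : step c1 c2 -> reach c2 c3 -> reach c1 c3.

(* after phase 0, the procedure starts phase 1 *)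
Definition init_config : config := (1, true, init_state).

End PartI.

(* Main.v *)
Require Import Defs.
From mathcomp Require Import all_boot zify.
Set Implicit Arguments. Unset Strict Implicit. Unset Printing Implicit Defensive.

Lemma oddm n : odd n = (n %% 2 == 1). Proof. by rewrite modn2; case: odd. Qed.

Lemma mem_take_nth (X : eqType) (d x : X) n (L : seq X) :
  x \in take n L -> exists2 j, (j < n) && (j < size L) & nth d L j = x.
Proof.
move=> H; have hj : index x (take n L) < size (take n L) by rewrite index_mem.
rewrite size_take in hj.
have hjn : index x (take n L) < n by move: hj; case: ifP => h; lia.
exists (index x (take n L)).
  by apply/andP; split => //; move: hj; case: ifP => h; lia.
by have := nth_index d H; rewrite nth_take.
Qed.

Lemma nth_mem_take (X : eqType) (d : X) n (L : seq X) j :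
  j < n -> j < size L -> nth d L j \in take n L.
Proof. move=> h1 h2; rewrite -(nth_take _ h1) mem_nth // size_take; case: ifP => _; lia. Qed.

Section Proof.
Variables (T : finType) (adj : rel T) (mate : T -> option T).
Hypothesis adj_sym : symmetric adj.
Hypothesis adj_irr : irreflexive adj.
Hypothesis mate_matching : forall u v, mate u = Some v -> adj u v /\ mate v = Some u.

Lemma mate_inj u v w : mate u = Some w -> mate v = Some w -> u = v.
Proof. move=> /mate_matching[_ h1] /mate_matching[_ h2]. congruence. Qed.

Lemma ancs_nth0 s k u d : nth d (ancs mate s k u) 0 = u.
Proof. by case: k. Qed.

Lemma ancs_par s k u d i : i.+1 < size (ancs mate s k u) ->
  par mate s (nth d (ancs mate s k u) i) = Some (nth d (ancs mate s k u) i.+1).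
Proof.
elim: k u i => [|k IH] u i /=; first by [].
case E: (par mate s u) => [p|] //=.
case: i => [|i] /= h; first by rewrite ancs_nth0.
by apply: IH.
Qed.

Lemma par_odd s (n : node T) p : par mate s n = Some (false, p) ->
  exists b, n = (true, b) /\ mate b = Some p.
Proof.
case: n => [[] t]; rewrite /par /=; last by [].
by case E: (mate t) => [q|] //= [<-]; exists t.
Qed.

Lemma par_true s (n : node T) b : par mate s n = Some (true, b) ->
  exists z, n = (false, z) /\ blos s (oparent s z) = b.
Proof.
case: n => [[] t]; rewrite /par /=; first by case: (mate t).
by move=> [<-]; exists t.
Qed.

Section Chain.
Variable s : state T.
Hypothesis V1 : forall z, lab s z = Odd -> lab s (oparent s z) = Even.
Hypothesis V2 : forall w p, lab s w = Even -> mate (blos s w) = Some p -> lab s p = Odd.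
Hypothesis E1 : forall z, lab s z = Odd -> lcp s (oparent s z) < lcpo s z.
Hypothesis E2 : forall w p, lab s w = Even -> mate (blos s w) = Some p ->
  lcpo s p < lcp s w /\ (0 < lcpo s w -> lcpo s p < lcpo s w).
Variables (u : T) (k : nat).
Hypothesis Hu : lab s u = Even.
Let L := ancs mate s k (true, blos s u).
Let d : node T := (true, u).

Definition valid (n : node T) :=
  if n.1 then exists w, lab s w = Even /\ blos s w = n.2 else lab s n.2 = Odd.

Lemma chain_valid i : i < size L -> valid (nth d L i).
Proof.
elim: i => [|i IH] h; first by rewrite /L ancs_nth0 /=; exists u.
have := ancs_par d h => hp; have := IH (ltnW h).
move: hp; rewrite -/L.
case: (nth d L i) => [[] t]; rewrite /par /=.
  case E: (mate t) => [q|] //= [<-] [w [hw hb]] /=.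
  by apply: (V2 hw); rewrite hb.
by move=> [<-] hz /=; exists (oparent s t); split => //; apply: V1.
Qed.

Lemma odd_dec i : forall j z0 z, j < i -> i < size L ->
  nth d L j = (false, z0) -> nth d L i = (false, z) -> lcpo s z < lcpo s z0.
Proof.
elim/ltn_ind: i => i IH j z0 z hj hi hn0 hn.
case: i IH hj hi hn => [|i1] // IH hj hi hn.
have := ancs_par d hi; rewrite -/L hn => /par_odd [b [hb hm]].
have hji1 : j < i1.
  have : j != i1 by apply/eqP => E; move: hn0; rewrite E hb.
  lia.
case: i1 IH hj hi hn hb hji1 => [|i2] // IH hj hi hn hb hji1.
have hi2 : i2.+1 < size L by lia.
have := ancs_par d hi2; rewrite -/L hb => /par_true [z2 [hz2 hbz]].
have v2 : lab s z2 = Odd by have := chain_valid (ltnW hi2); rewrite hz2.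
have [h1 _] := E2 (V1 v2) (etrans (congr1 mate hbz) hm).
have h2 := E1 v2.
case: (ltngtP j i2) => hc; [ | lia | ].
  have e1 : i2 < i2.+2 by [].
  have e2 : i2 < size L by lia.
  have := IH i2 e1 j z0 z2 hc e2 hn0 hz2; lia.
move: hn0; rewrite hc hz2 => -[e]; subst z2.
lia.
Qed.

Lemma blos_then_odd j w i z : j < i -> i < size L ->
  nth d L j = (true, blos s w) -> lab s w = Even -> nth d L i = (false, z) ->
  lcpo s z < lcp s w /\ (0 < lcpo s w -> lcpo s z < lcpo s w).
Proof.
move=> hji hi hj hw hz.
have hj1 : j.+1 < size L by lia.
have := ancs_par d hj1; rewrite -/L hj /par /=.
case E: (mate (blos s w)) => [p|] //= [hp].
have [e1 e2] := E2 hw E.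
case: (ltngtP j.+1 i) => hc; [ | lia | ].
  have := odd_dec hc hi (esym hp) hz; lia.
by move: hz; rewrite -hc -hp => -[<-].
Qed.

Lemma below_B iB p j : iB < size L -> (nth d L iB).1 = true ->
  mate (nth d L iB).2 = Some p -> j < iB ->
  (forall z0, nth d L j = (false, z0) -> lcpo s p < lcpo s z0) /\
  (forall w, lab s w = Even -> nth d L j = (true, blos s w) ->
     lcpo s p < lcp s w /\ (0 < lcpo s w -> lcpo s p < lcpo s w)).
Proof.
case E: (nth d L iB) => [bb bB] /= hiB hb1 hm hj; subst bb.
case: iB E hiB hj => [|i1] // E hiB hj.
have := ancs_par d hiB; rewrite -/L E => /par_true [z' [hz' hbz]].
have v' : lab s z' = Odd by have := chain_valid (ltnW hiB); rewrite hz'.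
have [h1 _] := E2 (V1 v') (etrans (congr1 mate hbz) hm).
have h2 := E1 v'.
split.
  move=> z0 hz0; case: (ltngtP j i1) => hc; [ | lia | ].
    have := odd_dec hc (ltnW hiB) hz0 hz'; lia.
  by move: hz0; rewrite hc hz' => -[<-]; lia.
move=> w hw hjw.
have hc : j < i1.
  have : j != i1 by apply/eqP => e; move: hjw; rewrite e hz'.
  lia.
have [a1 a2] := blos_then_odd hc (ltnW hiB) hjw hw hz'.
split; first lia. move=> /a2; lia.
Qed.

Lemma pred_of_odd j w p : j < size L -> nth d L j = (false, p) -> lab s w = Even ->
  mate (blos s w) = Some p -> 0 < j /\ nth d L j.-1 = (true, blos s w).
Proof.
case: j => [|j1] hj hn hw hm; first by move: hn; rewrite /L ancs_nth0.
split => //=.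
have := ancs_par d hj; rewrite -/L hn => /par_odd [b [hb hmb]].
by rewrite hb (mate_inj hmb hm).
Qed.

End Chain.

Record Inv (D : nat) (b : bool) (s : state T) : Prop := {
 i0 : 0 < D;
 iU : forall w, lab s w = Unl -> exists m, mate w = Some m /\ lab s m = Unl;
 iU2 : forall w, lab s w = Unl -> lcpo s w = 0;
 iO : forall w, lab s w = Odd -> 0 < lcpo s w;
 iP1 : forall w, lab s w = Even -> ~~ odd (lcp s w);
 iP2 : forall w, 0 < lcpo s w -> odd (lcpo s w);
 iQ : forall w, lcpo s w < D;
 iR : forall w, lab s w <> Unl -> lcpo s w = 0 -> lcp s w <= D;
 iV1 : forall z, lab s z = Odd -> lab s (oparent s z) = Even;
 iV2 : forall w p, lab s w = Even -> mate (blos s w) = Some p -> lab s p = Odd;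
 iE1 : forall z, lab s z = Odd -> lcp s (oparent s z) < lcpo s z;
 iE2 : forall w p, lab s w = Even -> mate (blos s w) = Some p ->
   lcpo s p < lcp s w /\ (0 < lcpo s w -> lcpo s p < lcpo s w);
 iK : forall v w, lab s v = Even -> adj v w -> lcp s v + 2 <= D ->
   (b = false \/ lcp s v + 2 < D) ->
   [/\ lab s w <> Unl, (lcpo s w = 0 -> lcp s w <= lcp s v + 2) &
       (0 < lcpo s w -> lcpo s w <= lcp s v + 1)] }.

Lemma inv_init : Inv 1 true (init_state mate).
Proof.
split => //=.
all: try (by move=> w; case: (mate w)).
all: try (by move=> w p; case: (mate w)).
all: try (move=> w; case E: (mate w) => [m|] // _; exists m; split => //;
  by have [_ ->] := mate_matching E).
all: try (move=> v w _ _ /=; lia).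
Qed.

Lemma inv_endgrow D s : Inv D true s -> (forall v x, ~ grow_elig adj D s v x) -> Inv D false s.
Proof.
move=> I hne; case: I => h0 hU hU2 hO hP1 hP2 hQ hR hV1 hV2 hE1 hE2 hK; split => //.
move=> v w hv hvw hle _.
case: (ltnP (lcp s v + 2) D) => hlt; first by apply: hK => //; right.
have hE : lcp s v + 2 = D by lia.
have hev := hP1 _ hv.
have hw : lab s w <> Unl.
  move=> hw; apply: (hne v w); rewrite /grow_elig; split.
    by move: hev; rewrite -hE !oddm; lia.
  by split => //; split; [lia | split].
split => //.
- move=> hz; have := hR w hw hz; lia.
- move=> h; have := hQ w; lia.
Qed.

Lemma inv_endbridge D s : Inv D false s -> Inv D.+1 true s.
Proof.
case=> h0 hU hU2 hO hP1 hP2 hQ hR hV1 hV2 hE1 hE2 hK; split => //.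
- move=> w; have := hQ w; lia.
- move=> w h1 h2; have := hR w h1 h2; lia.
- move=> v w hv hvw h1 [//|h2]; apply: hK; [done|done|lia|by left].
Qed.

Lemma inv_grow D s v x s' : Inv D true s -> grow_step adj mate D s v x s' -> Inv D true s'.
Proof.
case=> h0 hU hU2 hO hP1 hP2 hQ hR hV1 hV2 hE1 hE2 hK.
move=> [[hev [hv [hlv [hadj hx]]]] [m [hm ->]]].
have hmU : lab s m = Unl by have [m' [e1 e2]] := hU x hx; congruence.
have hxm : x != m.
  apply/eqP => e; have [h _] := mate_matching hm; rewrite e in h; by rewrite adj_irr in h.
have hmx : mate m = Some x by have [_ ->] := mate_matching hm.
have hvx : v != x by apply/eqP => e; move: hv; rewrite e hx.
have hvm : v != m by apply/eqP => e; move: hv; rewrite e hmU.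
have hD2 : 2 <= D by move: hev h0; rewrite !oddm; lia.
have hx0 : lcpo s x = 0 by apply: hU2.
have hm0 : lcpo s m = 0 by apply: hU2.
have nl t : lab s t <> Unl -> t != x /\ t != m.
  by move=> ht; split; apply/eqP => e; move: ht; rewrite e ?hx ?hmU.
split => /=.
- done.
- move=> w; case: eqP => // nx; case: eqP => // nm hw.
  have [m' [e1 e2]] := hU w hw; exists m'; split => //.
  case: eqP => [e|_].
    by subst m'; have [_ e] := mate_matching e1; case: nx; congruence.
  case: eqP => [e|_] //.
  by subst m'; have [_ e] := mate_matching e1; case: nm; congruence.
- by move=> w; case: eqP => // nx; case: eqP => // nm; apply: hU2.
- move=> w; case: eqP => [_ _|nx]; first lia.
  by case: eqP => // nm; apply: hO.
- move=> w; case: eqP => [_ //|nx]; case: eqP => [_ _|nm]; first by move: hev; rewrite !oddm; lia.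
  by apply: hP1.
- move=> w; case: eqP => [_ _|nx]; first by move: hev; rewrite !oddm; lia.
  by apply: hP2.
- move=> w; case: eqP => [_|nx]; first lia. by apply: hQ.
- move=> w; case: eqP => [_ _|nx]; first lia.
  case: eqP => [_ _ _|nm]; first lia. by apply: hR.
- move=> z; case: eqP => [e _|nx]; first subst z.
    by rewrite (negbTE hvx) (negbTE hvm).
  case: eqP => // nm hz; have hz' := hV1 _ hz.
  have [/negbTE -> /negbTE ->] := nl (oparent s z) (ltac:(by rewrite hz')). done.
- move=> w p; case: eqP => [_ //|nx]; case: eqP => [e|nm].
    by subst w; rewrite hmx => _ [<-]; rewrite eqxx.
  move=> hw hp; have hp' := hV2 _ _ hw hp.
  by have [/negbTE -> /negbTE ->] := nl p (ltac:(by rewrite hp')).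
- move=> z; case: eqP => [e _|nx]; first subst z.
    by rewrite (negbTE hvm); lia.
  case: eqP => // nm hz; have hz' := hV1 _ hz.
  have [_ /negbTE ->] := nl (oparent s z) (ltac:(by rewrite hz')). by apply: hE1.
- move=> w p; case: eqP => [_ //|nx]; case: eqP => [e|nm].
    by subst w; rewrite hmx => _ [<-]; rewrite eqxx hm0; lia.
  move=> hw hp; have hp' := hV2 _ _ hw hp.
  have [/negbTE -> _] := nl p (ltac:(by rewrite hp')).
  by apply: hE2.
- move=> v0 w; case: eqP => [_ //|nx]; case: eqP => [e _ _|nm hv0 hadj0]; first lia.
  move=> h1 [//|h2].
  have [k1 k2 k3] := hK v0 w hv0 hadj0 h1 (or_intror h2).
  have [/negbTE e1 /negbTE e2] := nl w k1.
  by rewrite e1 e2.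
Qed.

Lemma root_mem s u : Defs.root mate s u \in anc mate s u.
Proof. rewrite /Defs.root /anc /=. exact: mem_last. Qed.

Lemma lca_mem s u v : Defs.root mate s u = Defs.root mate s v ->
  lca mate s u v \in anc mate s u /\ lca mate s u v \in anc mate s v.
Proof.
move=> hr; rewrite /lca.
have hin : Defs.root mate s u \in [seq w <- anc mate s u | w \in anc mate s v].
  by rewrite mem_filter {1}hr !root_mem.
case E: [seq w <- anc mate s u | w \in anc mate s v] => [|h t]; first by rewrite E in hin.
have : h \in [seq w <- anc mate s u | w \in anc mate s v] by rewrite E mem_head.
by rewrite mem_filter => /andP [-> ->].
Qed.

Lemma side_facts D b s u B : Inv D b s -> lab s u = Even ->
  B \in anc mate s (true, blos s u) -> B.1 = true ->
  [/\ (exists w0, lab s w0 = Even /\ blos s w0 = B.2),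
   (forall p z0, mate B.2 = Some p ->
       (false, z0) \in pathto mate s (true, blos s u) B -> lcpo s p < lcpo s z0),
   (forall p w, mate B.2 = Some p -> lab s w = Even ->
       (true, blos s w) \in pathto mate s (true, blos s u) B ->
       lcpo s p < lcp s w /\ (0 < lcpo s w -> lcpo s p < lcpo s w)),
   (forall p w, lab s w = Even -> mate (blos s w) = Some p ->
       (false, p) \in pathto mate s (true, blos s u) B ->
       (true, blos s w) \in pathto mate s (true, blos s u) B) &
   (forall z, (false, z) \in anc mate s (true, blos s u) ->
       lcpo s z < lcp s u /\ (0 < lcpo s u -> lcpo s z < lcpo s u))].
Proof.
case=> h0 hU hU2 hO hP1 hP2 hQ hR hV1 hV2 hE1 hE2 hK hu hB hB1.
rewrite /pathto /anc; rewrite /anc in hB.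
set k := (2 * #|T|).+1.
set L := ancs mate s k (true, blos s u).
set d : node T := (true, u).
rewrite -/L in hB *.
set iB := index B L.
have hiB : iB < size L by rewrite index_mem.
have hnB : nth d L iB = B by rewrite nth_index.
split.
- have := chain_valid hV1 hV2 hu hiB; rewrite -/L -/d hnB.
  by move: hB1; case: B {hB iB hiB hnB} => [bb t] /= ->.
- move=> p z0 hm /(mem_take_nth d) [j /andP [hj1 hj2] hj].
  rewrite -hnB in hB1 hm.
  have [h _] := below_B hV1 hV2 hE1 hE2 hu hiB hB1 hm hj1.
  exact: h.
- move=> p w hm hw /(mem_take_nth d) [j /andP [hj1 hj2] hj].
  rewrite -hnB in hB1 hm.
  have [_ h] := below_B hV1 hV2 hE1 hE2 hu hiB hB1 hm hj1.
  exact: h.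
- move=> p w hw hm /(mem_take_nth d) [j /andP [hj1 hj2] hj].
  have [hj0 hjn] := pred_of_odd hj2 hj hw hm.
  rewrite -hjn; apply: (@nth_mem_take _ d); rewrite -/L; lia.
- move=> z hz.
  have hi : index (false, z) L < size L by rewrite index_mem.
  have hn : nth d L (index (false, z) L) = (false, z) by rewrite nth_index.
  have hi0 : 0 < index (false, z) L.
    case E: (index (false, z) L) => [|//]; move: hn; rewrite E /L ancs_nth0 //.
  apply: (blos_then_odd hV1 hV2 hE1 hE2 hu hi0 hi _ hu hn).
  by rewrite /L ancs_nth0.
Qed.

Lemma inv_bridge D s x y s' : Inv D false s -> bridge_step adj mate D s x y s' -> Inv D false s'.
Proof.
move=> I; have I' := I; case: I' => h0 hU hU2 hO hP1 hP2 hQ hR hV1 hV2 hE1 hE2 hK.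
case=> [[hadj [hmxy [hx [hy [hbxy hsum]]]]]].
move=> [hroot [hB1 ->]].
have [hBx hBy] := lca_mem hroot.
have [ax bx cx dx ex] := side_facts I hx hBx hB1.
have [ay bY cy dy ey] := side_facts I hy hBy hB1.
set B := lca mate s _ _ in hB1 hBx hBy ax bx cx dx ay bY cy dy *.
set Px := pathto mate s (true, blos s x) B in bx cx dx *.
set Py := pathto mate s (true, blos s y) B in bY cy dy *.
have big w : lcpo s w < D -> D <= lcp s x + 1 + lcp s y - lcpo s w by lia.
have nbeB p : mate B.2 = Some p -> ((false, p) \in Px ++ Py) = false.
  move=> hm; rewrite mem_cat; apply/negbTE/negP => /orP [h|h].
    by have := bx p p hm h; lia.
  by have := bY p p hm h; lia.
have labB p : mate B.2 = Some p -> lab s p = Odd.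
  by move=> hm; have [w0 [hw0 hb0]] := ax; apply: (hV2 _ _ hw0); rewrite hb0.
split => /=.
- done.
- move=> w; case: ifP => // Hbe hw.
  have [m [hm hmU]] := hU w hw; exists m; split => //.
  by rewrite hmU andbF.
- by move=> w; case: ifP => // _; apply: hU2.
- by move=> w; case: ifP => // _; apply: hO.
- move=> w; case: ifP => [/andP [_ /eqP ho] _|_]; last by apply: hP1.
  have := hP2 w (hO w ho); have := hQ w; move: hsum h0; rewrite !oddm; lia.
- exact: hP2.
- exact: hQ.
- move=> w; case: ifP => [/andP [_ /eqP ho]|_] hl hz; first by have := hO w ho; lia.
  exact: hR.
- move=> z; case: ifP => // _ hz.
  by case: ifP => // _; apply: hV1.
- move=> w p.
  set bw := (((false, w) \in Px ++ Py) && (lab s w == Odd)).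
  set iw := (_ || bw).
  case Hin: iw.
    by move=> _ hm; rewrite (nbeB p hm) /= (labB p hm).
  case Hbe: bw; first by rewrite /iw Hbe orbT in Hin.
  rewrite /iw Hbe /= in Hin.
  move=> hw hm; have hp := hV2 _ _ hw hm.
  rewrite hp andbT; case: ifP => // h; exfalso.
  move: Hin; rewrite hw eqxx /= !mem_cat.
  move: h; rewrite mem_cat => /orP [h|h].
    by rewrite (dx p w hw hm h).
  by rewrite (dy p w hw hm h) orbT.
- move=> z; case: ifP => // _ hz.
  case: ifP => [/andP [_ /eqP]|_]; first by rewrite hV1.
  exact: hE1.
- move=> w p.
  set bw := (((false, w) \in Px ++ Py) && (lab s w == Odd)).
  set iw := (_ || bw).
  case Hin: iw.
    move=> + hm; case Hbe: bw.
      move: Hbe => /andP [hin /eqP ho] _.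
      have hlt : lcpo s p < lcpo s w.
        by move: hin; rewrite mem_cat => /orP [h|h]; [apply: bx | apply: bY].
      have := big w (hQ w); lia.
    move=> hw; move: Hin; rewrite /iw Hbe orbF hw eqxx /= => /orP [hin|/eqP hb].
      by move: hin; rewrite mem_cat => /orP [h|h]; [apply: cx | apply: cy].
    by apply: hE2 => //; move: hm; rewrite -hb.
  case Hbe: bw; first by rewrite /iw Hbe orbT in Hin.
  exact: hE2.
- move=> v w; case: ifP => [Hbe _ _ hle _|Hbe hv hvw hle hor].
    have := big v (hQ v); lia.
  have [k1 k2 k3] := hK v w hv hvw hle hor.
  split => //.
  + by case: ifP.
  + case: ifP => [/andP [_ /eqP ho]|_]; last exact: k2.
    by have := hO w ho; lia.
Qed.

Definition InvC (c : config T) := Inv c.1.1 c.1.2 c.2.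

Lemma inv_step c1 c2 : step adj mate c1 c2 -> InvC c1 -> InvC c2.
Proof.
case=> /=.
- move=> D s v x s' h I; exact: inv_grow I h.
- move=> D s h I; exact: inv_endgrow I h.
- move=> D s x y s' h I; exact: inv_bridge I h.
- move=> D s _ I; exact: inv_endbridge I.
Qed.

Lemma inv_reach c1 c2 : reach adj mate c1 c2 -> InvC c1 -> InvC c2.
Proof. elim=> // a b c hs _ IH I; apply: IH; exact: inv_step hs I. Qed.

Lemma phase_mono c1 c2 : reach adj mate c1 c2 -> c1.1.1 <= c2.1.1.
Proof.
elim=> // a b c hs _ IH; apply: leq_trans IH.
by case: hs => /=.
Qed.

Lemma bridge_keep c1 c2 : reach adj mate c1 c2 -> forall D s1 s2,
  c1 = (D, false, s1) -> c2 = (D, false, s2) ->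
  forall v, lab s1 v = Even -> lab s2 v = Even /\ lcp s2 v = lcp s1 v.
Proof.
elim=> [c|a b c hs hr IH] D s1 s2 e1 e2 v hv.
  by rewrite e1 in e2; case: e2 => <-; split.
case: hs e1 hr IH.
- by move=> D' s v' x s' _ [].
- by move=> D' s _ [].
- move=> D' s x y s' [_ /= [_ [_ hs']]] [eD es] hr IH; subst D' s.
  have hv' : lab s' v = Even by rewrite hs' /=; case: ifP => //; rewrite hv.
  have [-> ->] := IH D s' s2 erefl e2 v hv'.
  by split => //; rewrite hs' /=; case: ifP => //; rewrite hv andbF.
- move=> D' s _ [eD es] hr _; subst D' s.
  have := phase_mono hr; rewrite e2 /=; lia.
Qed.

Lemma side_bound D s x y z : Inv D false s -> lab s x = Even -> lab s y = Even ->
  adj x y -> lcp s x + lcp s y = 2 * D - 2 ->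
  skew (lcp s x) (lcp s y) <> 0 -> skew (lcp s x) (lcp s y) <> 2 ->
  (false, z) \in anc mate s (true, blos s x) -> lcpo s z <= minn (lcp s x) (lcp s y).
Proof.
move=> I hx hy hxy hsum hs0 hs2 hz.
have [_ _ _ _ ex] := side_facts I hx (mem_head _ _) erefl.
rewrite /skew in hs0 hs2.
case: (ltngtP (lcp s x) (lcp s y)) => hc.
- have [e _] := ex z hz; lia.
- have hxy' : adj y x by rewrite adj_sym.
  have [k1 k2 k3] := iK I hy hxy' ltac:(lia) (or_introl erefl).
  have [e1 e2] := ex z hz.
  case: (posnP (lcpo s x)) => hp.
    have := k2 hp; lia.
  have := k3 hp; have := e2 hp; lia.
- lia.
Qed.

Lemma main D s s' x y z :
  reach adj mate (init_config mate) (D, false, s) ->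
  bridge_step adj mate D s x y s' ->
  skew (lcp s x) (lcp s y) <> 0 ->
  skew (lcp s x) (lcp s y) <> 2 ->
  lab s z = Odd -> lab s' z = Even ->
  maxn (lcp s x) (lcp s y) < lcp s' z /\
  (forall (s'' : state T) (w : T),
     reach adj mate (D, false, s') (D, false, s'') ->
     is_bridge adj mate D s'' z w \/ is_bridge adj mate D s'' w z ->
     skew (lcp s x) (lcp s y) < skew (lcp s'' z) (lcp s'' w)).
Proof.
move=> hr hbr hs0 hs2 hz hz'.
have I : Inv D false s by apply: (inv_reach hr inv_init).
have hbr' := hbr.
move: hbr' => [[hadj [hmxy [hx [hy [hbxy hsum]]]]] [hroot [hB1 hs']]].
have [hBx hBy] := lca_mem hroot.
set B := lca mate s _ _ in hB1 hBx hBy hs'.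
set Px := pathto mate s (true, blos s x) B in hs'.
set Py := pathto mate s (true, blos s y) B in hs'.
have hbe : (false, z) \in Px ++ Py.
  move: hz'; rewrite hs' /= hz /=; by case: ((false, z) \in Px ++ Py).
have hlz : lcp s' z = lcp s x + 1 + lcp s y - lcpo s z.
  by rewrite hs' /= hbe hz.
have hbound : lcpo s z <= minn (lcp s x) (lcp s y).
  move: hbe; rewrite mem_cat => /orP [h|h].
    exact: (side_bound I hx hy hadj hsum hs0 hs2 (mem_take h)).
  rewrite minnC.
  have hyx : adj y x by rewrite adj_sym.
  have hsum' : lcp s y + lcp s x = 2 * D - 2 by lia.
  have hs0' : skew (lcp s y) (lcp s x) <> 0 by move: hs0; rewrite /skew; lia.
  have hs2' : skew (lcp s y) (lcp s x) <> 2 by move: hs2; rewrite /skew; lia.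
  exact: (side_bound I hy hx hyx hsum' hs0' hs2' (mem_take h)).
have part1 : maxn (lcp s x) (lcp s y) < lcp s' z by rewrite hlz; lia.
split => // s'' w hr2 hb2.
have [hz'' hl''] := bridge_keep hr2 erefl erefl hz'.
have hs : lcp s'' z + lcp s'' w = 2 * D - 2.
  case: hb2 => [[_ [_ [_ [_ [_ h]]]]]|[_ [_ [_ [_ [_ h]]]]]]; lia.
move: hs0 hs2; rewrite /skew hl''; lia.
Qed.

End Proof.

Theorem lemma5 (T : finType) (adj : rel T) (mate : T -> option T)
  (adj_sym : symmetric adj) (adj_irr : irreflexive adj)
  (mate_matching : forall u v, mate u = Some v -> adj u v /\ mate v = Some u)
  (D : nat) (s s' : state T) (x y z : T) :
  reach adj mate (init_config mate) (D, false, s) ->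
  bridge_step adj mate D s x y s' ->
  skew (lcp s x) (lcp s y) <> 0 ->
  skew (lcp s x) (lcp s y) <> 2 ->
  lab s z = Odd -> lab s' z = Even ->
  maxn (lcp s x) (lcp s y) < lcp s' z /\
  (forall (s'' : state T) (w : T),
     reach adj mate (D, false, s') (D, false, s'') ->
     is_bridge adj mate D s'' z w \/ is_bridge adj mate D s'' w z ->
     skew (lcp s x) (lcp s y) < skew (lcp s'' z) (lcp s'' w)).
Proof. exact: (main adj_sym adj_irr mate_matching). Qed.
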